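(* Let $R=K[x_1,\ldots,x_n,x_{n+1}]$ over a field $K$, let $I\subset R$ be a monomial ideal with $\gcd(u,x_{n+1})=1$ for all $u\in\mathcal{G}(I)$, and let $\mathfrak{m}=(x_1,\ldots,x_{n+1})$. Let $h=fg$ where $f\neq1$ is a monomial of $R$, $g\in\mathcal{G}(I)$, and $\gcd(h,x_{n+1})=1$, and set $L:=x_{n+1}I+hR$. If $(x_1,\ldots,x_n)\in\mathrm{Ass}(R/I^t)$ for some $t\geq1$, then $\mathfrak{m}\in\mathrm{Ass}(R/L^{t+1})$.
   Context: $\mathcal{G}(I)$ denotes the unique minimal set of monomial generators of a monomial ideal $I$. *)

(* Defs.v *)
From HB Require Import structures.
From mathcomp Require Import all_boot all_algebra.
From mathcomp Require Import mpoly.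
Set Implicit Arguments. Unset Strict Implicit. Unset Printing Implicit Defensive.
Import GRing.Theory.
Local Open Scope ring_scope.

Section Ideals.
Variables (K : fieldType) (k : nat).
Local Notation R := {mpoly K[k]}.

Definition pideal := R -> Prop.

Definition gen_ideal (S : pideal) : pideal :=
  fun p => exists (cs : seq (R * R)),
    (forall c, c \in cs -> S c.2) /\ p = \sum_(c <- cs) c.1 * c.2.

Definition ideal_eq (I J : pideal) := forall p, I p <-> J p.

Definition monomial_ideal (I : pideal) :=
  exists M : 'X_{1..k} -> Prop,
    ideal_eq I (gen_ideal (fun p => exists2 m, M m & p = 'X_[m])).

(* G(I): monomials of I that are minimal w.r.t. divisibility among monomials of I.
   (for a monomial ideal this is the unique minimal monomial generating set) *)
Definition mingens (I : pideal) (m : 'X_{1..k}) : Prop :=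
  I 'X_[m] /\ forall m' : 'X_{1..k}, I 'X_[m'] -> lem m' m -> m' = m.

Definition ideal_mul (I J : pideal) : pideal :=
  gen_ideal (fun p => exists a b, [/\ I a, J b & p = a * b]).

Fixpoint ideal_pow (I : pideal) (t : nat) : pideal :=
  match t with
  | 0 => gen_ideal (fun p => p = 1)
  | t'.+1 => ideal_mul (ideal_pow I t') I
  end.

Definition ideal_add (I J : pideal) : pideal :=
  gen_ideal (fun p => I p \/ J p).

Definition principal (h : R) : pideal := gen_ideal (fun p => p = h).

Definition prime_ideal (P : pideal) :=
  [/\ (forall a b, P a -> P b -> P (a + b)),
      (forall a b, P b -> P (a * b)),
      P 0, ~ P 1 &
      (forall a b, P (a * b) -> P a \/ P b)].

(* P \in Ass(R/J): P is prime and P = (J : f) = Ann_R(f + J) for some f in R. *)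
Definition Ass_quot (J P : pideal) :=
  prime_ideal P /\ exists f : R, forall p, P p <-> J (p * f).

Definition var_ideal (A : pred 'I_k) : pideal :=
  gen_ideal (fun p => exists2 i, A i & p = 'X_i).

End Ideals.

(* Main.v *)
Require Import Defs.
From HB Require Import structures.
From mathcomp Require Import all_boot all_algebra.
From mathcomp Require Import mpoly.
From Stdlib Require Import Classical.
From mathcomp Require Import zify.
Import GRing.Theory.
Local Open Scope ring_scope.
Set Implicit Arguments. Unset Strict Implicit. Unset Printing Implicit Defensive.

Section Gen.
Variables (K : fieldType) (k : nat).
Local Notation R := {mpoly K[k]}.
Local Notation MN := 'X_{1..k}.

Definition closedI (J : pideal K k) :=
  [/\ J 0, (forall a b, J a -> J b -> J (a + b)) & (forall r a, J a -> J (r * a))].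

Lemma gen_closed (S : pideal K k) : closedI (gen_ideal S).
Proof.
split.
- by exists [::]; split => //; rewrite big_nil.
- move=> a b [cs [Hc ->]] [ds [Hd ->]]; exists (cs ++ ds); split.
    by move=> c; rewrite mem_cat => /orP [/Hc|/Hd].
  by rewrite big_cat.
- move=> r a [cs [Hc ->]]; exists [seq (r * c.1, c.2) | c <- cs]; split.
    by move=> c /mapP [c' /Hc H ->].
  rewrite big_map big_distrr /=; apply: eq_bigr => c _; by rewrite mulrA.
Qed.

Lemma gen_in (S : pideal K k) s : S s -> gen_ideal S s.
Proof. by move=> Hs; exists [:: (1, s)]; split; [move=> c; rewrite inE => /eqP -> | rewrite big_seq1 mul1r]. Qed.

Lemma gen_sub (S J : pideal K k) : closedI J -> (forall s, S s -> J s) ->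
  forall p, gen_ideal S p -> J p.
Proof.
move=> [J0 JD JM] HS p [cs [Hc ->]]; elim: cs Hc => [|c cs IH] Hc.
  by rewrite big_nil.
rewrite big_cons; apply: JD; first by apply: JM; apply: HS; apply: Hc; rewrite inE eqxx.
by apply: IH => c' Hc'; apply: Hc; rewrite inE Hc' orbT.
Qed.

Definition Mon (D : MN -> Prop) : pideal K k := fun p => forall m, ~ D m -> p@_m = 0.
Definition upcl (D : MN -> Prop) := forall m m', D m -> (m <= m')%MM -> D m'.
Definition Dmul (D1 D2 : MN -> Prop) m := exists a b, [/\ D1 a, D2 b & (a + b <= m)%MM].

Lemma Mon_mul D1 D2 p q : Mon D1 p -> Mon D2 q -> Mon (Dmul D1 D2) (p * q).
Proof.
move=> Hp Hq m Hm; rewrite mcoeffM big1 // => kk /eqP Hk.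
case: (classic (D1 kk.1)) => H1; last by rewrite Hp // mul0r.
case: (classic (D2 kk.2)) => H2; last by rewrite Hq // mulr0.
by exfalso; apply: Hm; exists kk.1, kk.2; split => //; rewrite -Hk lepm_refl.
Qed.

Lemma Mon_closed D : upcl D -> closedI (Mon D).
Proof.
move=> HD; split.
- by move=> m _; rewrite mcoeff0.
- by move=> a b Ha Hb m Hm; rewrite mcoeffD Ha // Hb // addr0.
- move=> r a Ha m Hm; apply: (@Mon_mul (fun _ => True) D) => //.
  move=> [a0 [b0 [_ Hb Hab]]]; apply: Hm; apply: HD Hb _.
  exact: lepm_trans (lem_addl _ _) Hab.
Qed.

Lemma Mon_X D a : D a -> Mon D 'X_[a].
Proof. by move=> Ha m Hm; rewrite mcoeffX; case: eqP => // E; subst. Qed.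

Lemma Mon_gen D (J : pideal K k) : closedI J -> (forall m, D m -> J 'X_[m]) ->
  forall p, Mon D p -> J p.
Proof.
move=> [J0 JD JM] HX p Hp; rewrite (mpolyE p) big_seq.
apply: (big_ind J) => // m Hm; rewrite -mul_mpolyC; apply: JM.
apply: HX; apply: NNPP => HD; move: Hm; rewrite mcoeff_msupp Hp //.
by rewrite eqxx.
Qed.

Lemma gen_eq (S : pideal K k) D : upcl D -> (forall s, S s -> Mon D s) ->
  (forall m, D m -> gen_ideal S 'X_[m]) -> ideal_eq (gen_ideal S) (Mon D).
Proof.
move=> HD H1 H2 p; split.
- exact: gen_sub (Mon_closed HD) H1 p.
- exact: Mon_gen (gen_closed S) H2 p.
Qed.

Lemma gen_X_mul (S : pideal K k) a m : S 'X_[a] -> (a <= m)%MM -> gen_ideal S 'X_[m].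
Proof.
move=> Ha Ham; rewrite -(submK Ham) mpolyXD.
by case: (gen_closed S) => _ _ HM; apply: HM; apply: gen_in.
Qed.

Lemma upcl_Dmul D1 D2 : upcl (Dmul D1 D2).
Proof. move=> m m' [a [b [Ha Hb Hab]]] Hm; exists a, b; split => //; exact: lepm_trans Hab Hm. Qed.

Fixpoint Dpw (D : MN -> Prop) t : MN -> Prop :=
  match t with 0 => fun _ => True | t'.+1 => Dmul (Dpw D t') D end.

Lemma upcl_Dpw D t : upcl (Dpw D t).
Proof. by case: t => [|t] //=; exact: upcl_Dmul. Qed.

Lemma eq_closed (I J : pideal K k) : ideal_eq I J -> closedI J -> closedI I.
Proof.
move=> E [J0 JD JM]; split.
- by apply/E.
- by move=> a b /E Ha /E Hb; apply/E; apply: JD.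
- by move=> r a /E Ha; apply/E; apply: JM.
Qed.

Lemma mul_eq (A B : pideal K k) DA DB : upcl DA -> upcl DB ->
  ideal_eq A (Mon DA) -> ideal_eq B (Mon DB) ->
  ideal_eq (ideal_mul A B) (Mon (Dmul DA DB)).
Proof.
move=> HA HB EA EB; apply: gen_eq; first exact: upcl_Dmul.
- by move=> s [a [b [/EA Ha /EB Hb ->]]]; apply: Mon_mul.
- move=> m [a [b [Ha Hb Hab]]]; apply: gen_X_mul Hab.
  exists 'X_[a], 'X_[b]; split; last by rewrite mpolyXD.
  + by apply/EA; apply: Mon_X.
  + by apply/EB; apply: Mon_X.
Qed.

Lemma pow_eq (I : pideal K k) D : upcl D -> ideal_eq I (Mon D) ->
  forall t, ideal_eq (ideal_pow I t) (Mon (Dpw D t)).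
Proof.
move=> HD E; elim => [|t IH].
- apply: gen_eq => //.
  + by move=> s _ m [].
  + move=> m _; apply: (@gen_X_mul _ 0%MM); first by rewrite mpolyX0.
    by apply/mnm_lepP => i; rewrite mnm0E.
- exact: (mul_eq (@upcl_Dpw D t) HD IH E).
Qed.

Lemma mono_eq (I : pideal K k) : monomial_ideal I ->
  upcl (fun m => I 'X_[m]) /\ ideal_eq I (Mon (fun m => I 'X_[m])).
Proof.
move=> [M E]; have CI := eq_closed E (gen_closed _).
have HD : upcl (fun m => I 'X_[m]).
  move=> m m' Hm Hmm'; rewrite -(submK Hmm') mpolyXD.
  by case: CI => _ _ HM; apply: HM.
split => // p; split.
- move=> /E; apply: gen_sub (Mon_closed HD) _ p.
  move=> s [m0 Hm0 ->]; apply: Mon_X; apply/E; apply: gen_in; by exists m0.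
- exact: Mon_gen CI (fun m H => H) p.
Qed.
End Gen.

Section Spec.
Variables (K : fieldType) (n : nat).
Local Notation R := {mpoly K[n.+1]}.
Local Notation MN := 'X_{1..n.+1}.

Lemma exists_mingen (I : pideal K n.+1) m : I 'X_[m] ->
  exists u, mingens I u /\ (u <= m)%MM.
Proof.
move: {2}(mdeg m).+1 (ltnSn (mdeg m)) => N; elim: N m => [|N IH] m //.
move=> HN Hm.
case: (classic (forall m', I 'X_[m'] -> lem m' m -> m' = m)) => H.
  by exists m; split => //; apply: lepm_refl.
have [m' Hm'] := not_all_ex_not _ _ H.
have [H1 H2] := imply_to_and _ _ Hm'.
have [H3 H4] := imply_to_and _ _ H2.
have Hlt : (mdeg m' < N)%N.
  rewrite -(submK H3) mdegD in HN.
  have : (m - m')%MM != 0%MM.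
    by apply/eqP => E; apply: H4; rewrite -(submK H3) E; apply/mnmP => i; rewrite mnmDE mnm0E.
  rewrite -mdeg_eq0 => Hne; move: HN Hne; set x := mdeg (m - m'); lia.
have [u [Hu Hum]] := IH m' Hlt H1.
by exists u; split => //; apply: lepm_trans Hum H3.
Qed.

Local Notation mx := (@ord_max n).
Definition cut (m : MN) : MN := [multinom (if i == mx then 0 else m i)%N | i < n.+1].
Definition tm (j : nat) : MN := [multinom (if i == mx then j else 0)%N | i < n.+1].
Definition mulm (j : nat) (h : MN) : MN := [multinom (j * h i)%N | i < n.+1].

Ltac coords := apply/mnm_lepP => i; rewrite ?mnmDE ?mnmE ?mnm0E ?mnm1E.

Section WithI.
Variable (DI : MN -> Prop).

Lemma Dpw_addh j a hh kk : Dpw DI j a -> DI hh -> Dpw DI (j + kk) (a + mulm kk hh).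
Proof.
move=> Ha Hh; elim: kk => [|kk IH].
  rewrite addn0; suff -> : (a + mulm 0 hh = a)%MM by [].
  by apply/mnmP => i; rewrite mnmDE mnmE mul0n addn0.
rewrite addnS /=; exists (a + mulm kk hh)%MM, hh; split => //.
coords; rewrite ?mnmDE ?mnmE; lia.
Qed.

Lemma Dpw_cut : (forall m, DI m -> DI (cut m)) ->
  forall j a, Dpw DI j a -> Dpw DI j (cut a).
Proof.
move=> HC; elim => [|j IH] a //= [a0 [b [H0 Hb Hab]]].
exists (cut a0), (cut b); split; [exact: IH | exact: HC |].
move/mnm_lepP: Hab => Hab; coords; have := Hab i; rewrite mnmDE.
by case: (i == mx) => //; lia.
Qed.
End WithI.

Section Key.
Variables (DI : MN -> Prop) (h : MN).
Definition DL (m : MN) := Dmul (fun a => (U_(mx) <= a)%MM) DI m \/ (h <= m)%MM.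

Lemma key kk m : Dpw DL kk m -> exists j a, [/\ (j <= kk)%N, Dpw DI j a &
  forall i, (a i + (if i == mx then j else 0) + (kk - j) * h i <= m i)%N].
Proof.
elim: kk m => [|kk IH] m /=.
  move=> _; exists 0%N, 0%MM; split => // i; rewrite mnm0E; by case: (i == mx).
move=> [a0 [b [Ha0 Hb Hab]]]; have [j [a [Hj Ha Hc]]] := IH a0 Ha0.
move/mnm_lepP: Hab => Hab.
case: Hb => [[a' [b' [He Hb' Hab']]] | Hh].
- exists j.+1, (a + b')%MM; split => //.
    by exists a, b'; split => //; apply: lepm_refl.
  move/mnm_lepP: He => He; move/mnm_lepP: Hab' => Hab' i.
  have := Hab i; have := Hc i; have := He i; have := Hab' i.
  rewrite !mnmDE mnm1E subSS eq_sym; case: (i == mx) => /=; lia.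
- exists j, a; split => //; first by apply: leqW.
  move/mnm_lepP: Hh => Hh i.
  have := Hab i; have := Hc i; have := Hh i.
  rewrite !mnmDE subSn //; case: (i == mx) => /=; lia.
Qed.

Lemma conv j a : Dpw DI j a -> Dpw DL j (a + tm j).
Proof.
elim: j a => [|j IH] a //= [a0 [b [H0 Hb Hab]]].
exists (a0 + tm j)%MM, (b + U_(mx))%MM; split; first exact: IH.
  left; exists U_(mx)%MM, b; split => //; first exact: lepm_refl.
  by rewrite addmC lepm_refl.
move/mnm_lepP: Hab => Hab; coords; have := Hab i.
rewrite ?mnmDE ?mnmE ?mnm1E ?[mx == i]eq_sym; case: (i == mx) => /=; lia.
Qed.

Lemma stepL j x : Dpw DL j x -> Dpw DL j.+1 (x + h).
Proof. move=> Hx; exists x, h; split => //; [by right; apply: lepm_refl | exact: lepm_refl]. Qed.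

Lemma key_contra t (u : MN) : u mx = 0%N -> h mx = 0%N -> DI h -> ~ Dpw DI t u ->
  (forall m, DI m -> DI (cut m)) ->
  ~ Dpw DL t.+1 (tm t + u + h).
Proof.
move=> Hu Hh HDh Hnot HC /key [j [a [Hj Ha Hc]]].
have Hjt : (j <= t)%N.
  have := Hc mx; rewrite !mnmDE mnmE eqxx Hu Hh; lia.
apply: Hnot; have := Dpw_addh (t - j) (Dpw_cut HC Ha) HDh.
rewrite subnKC // => H; apply: upcl_Dpw H _; coords.
have := Hc i; rewrite !mnmDE mnmE.
case E: (i == mx) => /=; first by move/eqP: E => ->; rewrite Hu Hh; lia.
rewrite subSn //; lia.
Qed.
End Key.
End Spec.

Section Var.
Variables (K : fieldType) (k : nat).
Local Notation R := {mpoly K[k]}.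
Local Notation MN := 'X_{1..k}.

Lemma var_eq (A : pred 'I_k) :
  ideal_eq (var_ideal (K:=K) A) (Mon (K:=K) (fun m : MN => exists2 i, A i & (0 < m i)%N)).
Proof.
apply: gen_eq.
- move=> m m' [i Hi Hm] /mnm_lepP Hmm'; exists i => //; have := Hmm' i; lia.
- by move=> s [i Hi ->]; apply: Mon_X; exists i => //; rewrite mnm1E eqxx.
- move=> m [i Hi Hm]; apply: (@gen_X_mul _ _ _ U_(i)%MM); first by exists i.
  apply/mnm_lepP => j; rewrite mnm1E; case: eqP => [<-|] //=; lia.
Qed.

Lemma var_true (p : R) : var_ideal (K:=K) (fun _ : 'I_k => true) p <-> p@_0 = 0.
Proof.
split.
- move/(var_eq _) => H; apply: H => -[i _]; by rewrite mnm0E.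
- move=> H; apply/(var_eq _) => m Hm.
  suff -> : m = 0%MM by [].
  apply/mnmP => i; rewrite mnm0E; case: (posnP (m i)) => // Hi.
  by exfalso; apply: Hm; exists i.
Qed.

Lemma mcoeff0M (p q : R) : (p * q)@_0 = p@_0 * q@_0.
Proof. exact: (mcoeff0_is_multiplicative _ _).1. Qed.

Lemma var_prime : prime_ideal (var_ideal (K:=K) (fun _ : 'I_k => true)).
Proof.
split.
- by move=> a b /var_true Ha /var_true Hb; apply/var_true; rewrite mcoeffD Ha Hb addr0.
- by move=> a b /var_true Hb; apply/var_true; rewrite mcoeff0M Hb mulr0.
- by apply/var_true; rewrite mcoeff0.
- by move/var_true; rewrite mcoeff1 eqxx => /eqP; rewrite oner_eq0.
- move=> a b /var_true; rewrite mcoeff0M => /eqP; rewrite mulf_eq0 => /orP [] /eqP H.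
  + by left; apply/var_true.
  + by right; apply/var_true.
Qed.
End Var.
Unset Implicit Arguments. Set Strict Implicit.

Theorem proposition3p1 (K : fieldType) (n : nat) (I : pideal K n.+1)
    (f g : 'X_{1..n.+1}) (t : nat) :
  monomial_ideal I ->
  (forall u, mingens I u -> u ord_max = 0%N) ->
  f != 0%MM ->
  mingens I g ->
  (f + g)%MM ord_max = 0%N ->
  (1 <= t)%N ->
  Ass_quot (ideal_pow I t) (var_ideal (fun i : 'I_n.+1 => (i < n)%N)) ->
  Ass_quot
    (ideal_pow
       (ideal_add (fun p => exists2 q, I q & p = 'X_ord_max * q)
                  (principal ('X_[f] * 'X_[g])))
       t.+1)
    (var_ideal (fun _ : 'I_n.+1 => true)).
Proof.
move=> HI Hmin Hf Hg Hfg Ht [[_ _ _ HP1 _] [w Hw]].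
have [HDu EI] := mono_eq HI.
set DI := fun m => I 'X_[m] in HDu EI.
have Ept := pow_eq HDu EI t.
set mx := @ord_max n.
have HC : forall m, DI m -> DI (cut m).
  move=> m /exists_mingen [u [Hu Hum]]; apply: HDu (Hu.1) _.
  have Hu0 := Hmin u Hu; move/mnm_lepP: Hum => Hum; apply/mnm_lepP => i.
  rewrite mnmE; case: eqP => [->|_]; [by rewrite Hu0 | exact: Hum].
have Hf0 : f mx = 0%N by move: Hfg; rewrite mnmDE /mx; lia.
have Hg0 : g mx = 0%N by move: Hfg; rewrite mnmDE /mx; lia.
set h := (f + g)%MM.
have HDh : DI h := HDu g h Hg.1 (lem_addl f g).
have Hnw : ~ Mon (Dpw DI t) w.
  by move/Ept => H; apply: HP1; apply/Hw; rewrite mul1r.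
have [m Hm] := not_all_ex_not _ _ Hnw.
have [Hnm Hwm] := imply_to_and _ _ Hm.
set u := cut m.
have Hu0 : u mx = 0%N by rewrite mnmE eqxx.
have Hnu : ~ Dpw DI t u.
  move=> H; apply: Hnm; apply: upcl_Dpw H _; apply/mnm_lepP => i.
  by rewrite mnmE; case: (i == mx).
have Hui : forall i : 'I_n.+1, i != mx -> Dpw DI t (U_(i) + u)%MM.
  move=> i Hi.
  have Hi' : (i < n)%N.
    have := ltn_ord i; move: Hi; rewrite /mx; move/eqP => Hi.
    case: (ltngtP i n) => // E; [lia | by exfalso; apply: Hi; apply: val_inj].
  have : ideal_pow I t ('X_i * w) by apply/Hw; apply: gen_in; exists i.
  move/Ept => H.
  have : Dpw DI t (U_(i) + m)%MM.
    apply: NNPP => H'; apply: Hwm; move: (H _ H'); by rewrite mulrC mcoeffMX.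
  move/(Dpw_cut HC) => H2; apply: upcl_Dpw H2 _; apply/mnm_lepP => j.
  by rewrite ?mnmE ?mnmDE ?mnm1E; case: (j == ord_max).
have [i0 Hi0] : exists i0, (0 < f i0)%N.
  apply: NNPP => H; move/eqP: Hf; apply; apply/mnmP => i; rewrite mnm0E.
  case: (posnP (f i)) => // Hp; exfalso; apply: H; by exists i.
have Hi0mx : i0 != mx by apply/eqP => E; move: Hi0; rewrite E Hf0.
set L := ideal_add _ _.
have HDL : upcl (DL DI h).
  move=> a b [Ha|Ha] Hab; [left; exact: upcl_Dmul Ha Hab | right; exact: lepm_trans Ha Hab].
have EL : ideal_eq L (Mon (DL DI h)).
  apply: gen_eq => //.
  - move=> s [[q Hq ->]|Hs].
    + have H := Mon_mul (@Mon_X K n.+1 (fun a => (U_(mx) <= a)%MM) U_(mx) (lepm_refl _)) (proj1 (EI q) Hq).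
      by move=> m' Hm'; apply: H => H'; apply: Hm'; left.
    + have H : Mon (fun m => (h <= m)%MM) s.
        have Hcl : closedI (Mon (K:=K) (fun m => (h <= m)%MM)).
          by apply: Mon_closed => a b Ha Hab; exact: lepm_trans Ha Hab.
        apply: (gen_sub Hcl _ Hs).
        by move=> s' ->; rewrite -mpolyXD; apply: Mon_X; apply: lepm_refl.
      by move=> m' Hm'; apply: H => H'; apply: Hm'; right.
  - move=> m' [[a [b [Ha Hb Hab]]]|Hh].
    + apply: (@gen_X_mul _ _ _ (U_(mx) + b)%MM).
        by left; exists 'X_[b]; [exact: Hb | rewrite mpolyXD].
      apply: lepm_trans Hab; move/mnm_lepP: Ha => Ha; apply/mnm_lepP => i.
      by rewrite !mnmDE /mx; have := Ha i; lia.
    + apply: (@gen_X_mul _ _ _ h) => //.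
      by right; apply: gen_in; rewrite mpolyXD.
have ELp := pow_eq HDL EL t.+1.
set vm := (@tm n t + u + h)%MM.
split; first exact: var_prime.
exists 'X_[vm] => p; split.
- have [C0 CD CM] : closedI (ideal_pow L t.+1) by exact: gen_closed.
  move=> Hp; apply: (@gen_sub _ _ _ (fun p => ideal_pow L t.+1 (p * 'X_[vm]))) Hp.
  + split.
    * by rewrite mul0r.
    * by move=> a b Ha Hb; rewrite mulrDl; apply: CD.
    * by move=> r a Ha; rewrite -mulrA; apply: CM.
  + move=> s [i _ ->]; rewrite -mpolyXD; apply/ELp; apply: Mon_X.
    case: (eqVneq i mx) => [->|Hi].
    * have Ha : Dpw DI t.+1 (u + h)%MM.
        exists (U_(i0) + u)%MM, g; split; [exact: Hui | exact: Hg.1 |].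
        apply/mnm_lepP => j; rewrite !mnmDE mnm1E.
        by case: eqP => [<-|] /=; lia.
      apply: upcl_Dpw (conv h Ha) _; apply/mnm_lepP => j.
      rewrite ?mnmDE ?mnmE ?mnm1E /mx [ord_max == j]eq_sym; case: (j == mx) => /=; lia.
    * have := stepL (conv h (Hui i Hi)) => Hb.
      apply: upcl_Dpw Hb _; apply/mnm_lepP => j.
      rewrite !mnmDE; lia.
- move/ELp => H; apply/var_true.
  have := H vm (key_contra Hu0 (Hfg : h mx = 0%N) HDh Hnu HC).
  by rewrite -{1}[vm]addm0 mcoeffMX.
Qed.
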